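(* Let $b=1/2$, let $\mathcal B$ be a Hamel basis of $\mathbb{R}$ over $\mathbb{Q}$ with $b\in\mathcal B$, and let $\pi:\mathbb{R}\to[0,1]$ be defined by $\pi(x)=\lambda^x_b-\lfloor\lambda^x_b\rfloor$ if $\lambda^x_b$ is not an odd integer, and $\pi(x)=1$ if $\lambda^x_b$ is an odd integer. Then $\pi$ is an extreme function for $I_b$: whenever $\pi_1,\pi_2:\mathbb{R}\to\mathbb{R}_+$ are valid functions for $I_b$ with $\pi=\tfrac12\pi_1+\tfrac12\pi_2$, we have $\pi_1=\pi_2=\pi$.
   Context: For $b\in\mathbb{R}\setminus\mathbb{Z}$, $I_b$ is the set of finite-support functions $y:\mathbb{R}\to\mathbb{Z}_+$ (i.e. $y(x)=0$ for all but finitely many $x$) such that $\sum_{x\in\mathbb{R}} y(x)\,x\equiv b \pmod 1$. A function $\pi:\mathbb{R}\to\mathbb{R}_+$ is a (nonnegative) valid function for $I_b$ if $\sum_{x\in\mathbb{R}}\pi(x)y(x)\ge 1$ for every $y\in I_b$. A Hamel basis is a basis of $\mathbb{R}$ as a vector space over $\mathbb{Q}$; for $x\in\mathbb{R}$, $\lambda^x_b\in\mathbb{Q}$ denotes the coefficient of the basis element $b$ in the unique expression of $x$ as a finite rational linear combination of elements of $\mathcal B$. *)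

(* Defs.v *)
From Stdlib Require Import Reals QArith Qround Qreals ZArith List Classical ClassicalEpsilon.
Open Scope R_scope.

Definition lsum (l : list R) (f : R -> R) : R :=
  fold_right (fun r acc => f r + acc) 0 l.

Definition represents (B : R -> Prop) (c : R -> Q) (x : R) : Prop :=
  exists l : list R, NoDup l /\ (forall r, In r l -> B r) /\
    (forall r, ~ In r l -> (c r == 0)%Q) /\
    x = lsum l (fun r => Q2R (c r) * r).

Definition is_Hamel_basis (B : R -> Prop) : Prop :=
  (forall x, exists c, represents B c x) /\
  (forall c, represents B c 0 -> forall r, (c r == 0)%Q).

(* lambda^x_b : the coefficient of b in the (unique) expansion of x. *)
Definition hamel_coef (B : R -> Prop) (b x : R) : Q :=
  (epsilon (inhabits (fun _ : R => 0%Q)) (fun c => represents B c x)) b.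

(* y : R -> nat is finitely supported with support in the NoDup list l
   (any such l gives the same sums). *)
Definition support_in (y : R -> nat) (l : list R) : Prop :=
  NoDup l /\ (forall x, y x <> 0%nat -> In x l).

Definition in_Ib (b : R) (y : R -> nat) (l : list R) : Prop :=
  exists k : Z, lsum l (fun x => INR (y x) * x) - b = IZR k.

Definition valid (b : R) (p : R -> R) : Prop :=
  (forall x, 0 <= p x) /\
  (forall (y : R -> nat) (l : list R), support_in y l -> in_Ib b y l ->
      lsum l (fun x => p x * INR (y x)) >= 1).

Definition extreme (b : R) (p : R -> R) : Prop :=
  valid b p /\
  forall p1 p2 : R -> R, valid b p1 -> valid b p2 ->
    (forall x, p x = /2 * p1 x + /2 * p2 x) ->
    (forall x, p1 x = p x) /\ (forall x, p2 x = p x).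

Definition is_odd_integer (q : Q) : Prop :=
  exists k : Z, (q == inject_Z (2 * k + 1))%Q.

Definition pi_half (B : R -> Prop) (x : R) : R :=
  let q := hamel_coef B (/2) x in
  match excluded_middle_informative (is_odd_integer q) with
  | left _ => 1
  | right _ => Q2R (q - inject_Z (Qfloor q))
  end.

(* Main.v *)
Require Import Defs.
From Stdlib Require Import Reals QArith Qreals Qround ZArith List Permutation Lra Lia Classical ClassicalEpsilon.
Open Scope R_scope.

Lemma lsum_nil f : lsum nil f = 0. Proof. reflexivity. Qed.
Lemma lsum_cons a l f : lsum (a :: l) f = f a + lsum l f. Proof. reflexivity. Qed.

Lemma lsum_app l1 l2 f : lsum (l1 ++ l2) f = lsum l1 f + lsum l2 f.
Proof. induction l1; simpl; [ring| rewrite IHl1; ring]. Qed.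

Lemma lsum_ext_in l f g : (forall x, In x l -> f x = g x) -> lsum l f = lsum l g.
Proof. induction l; simpl; intros H; auto. rewrite H, IHl; auto. Qed.

Lemma lsum_ext l f g : (forall x, f x = g x) -> lsum l f = lsum l g.
Proof. intros; apply lsum_ext_in; auto. Qed.

Lemma lsum_plus l f g : lsum l (fun x => f x + g x) = lsum l f + lsum l g.
Proof. induction l; simpl; [ring| rewrite IHl; ring]. Qed.

Lemma lsum_minus l f g : lsum l (fun x => f x - g x) = lsum l f - lsum l g.
Proof. induction l; simpl; [ring| rewrite IHl; ring]. Qed.

Lemma lsum_scal l c f : lsum l (fun x => c * f x) = c * lsum l f.
Proof. induction l; simpl; [ring| rewrite IHl; ring]. Qed.

Lemma lsum_repeat a n f : lsum (repeat a n) f = INR n * f a.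
Proof. induction n; simpl repeat; [simpl; ring| rewrite lsum_cons, IHn, S_INR; ring]. Qed.

Lemma lsum_zero l f : (forall x, In x l -> f x = 0) -> lsum l f = 0.
Proof. induction l; simpl; intros H; [reflexivity|]. rewrite H, IHl; auto. ring. Qed.

Lemma lsum_nonneg l f : (forall x, In x l -> 0 <= f x) -> 0 <= lsum l f.
Proof. induction l; simpl; intros H; [lra|]. pose proof (H a (or_introl eq_refl)). pose proof (IHl (fun x h => H x (or_intror h))). lra. Qed.

Lemma lsum_ge_in l f a : (forall x, In x l -> 0 <= f x) -> In a l -> f a <= lsum l f.
Proof. induction l; simpl; intros H Ha; [contradiction|]. destruct Ha as [->|Ha].
 - pose proof (lsum_nonneg l f (fun x h => H x (or_intror h))). lra.
 - pose proof (H a0 (or_introl eq_refl)). pose proof (IHl (fun x h => H x (or_intror h)) Ha). lra. Qed.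

Lemma lsum_perm l l' f : Permutation l l' -> lsum l f = lsum l' f.
Proof. induction 1; simpl; try lra. Qed.

Lemma lsum_extend (l L : list R) h : NoDup l -> NoDup L -> incl l L ->
  (forall r, In r L -> ~ In r l -> h r = 0) -> lsum L h = lsum l h.
Proof.
  revert L. induction l as [|a l IH]; intros L Hl HL Hinc Hz.
  - simpl. apply lsum_zero. intros x Hx; apply Hz; auto.
  - assert (Ha : In a L) by (apply Hinc; simpl; auto).
    destruct (in_split a L Ha) as [u [v ->]].
    rewrite (lsum_perm _ (a :: u ++ v)) by (apply Permutation_sym, Permutation_middle).
    simpl. inversion Hl; subst.
    rewrite (IH (u ++ v)); auto.
    + eapply NoDup_remove_1; eauto.
    + intros r Hr. assert (In r (u ++ a :: v)) by (apply Hinc; simpl; auto).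
      apply in_app_or in H. apply in_or_app. destruct H as [H|[H|H]]; auto. subst; contradiction.
    + intros r Hr Hn. apply Hz.
      * apply in_app_or in Hr; apply in_or_app; simpl; tauto.
      * intros [E|E]; [subst; apply (NoDup_remove_2 _ _ _ HL); auto | contradiction].
Qed.

Lemma lsum_flat (l : list R) (y : R -> nat) h :
  lsum (flat_map (fun x => repeat x (y x)) l) h = lsum l (fun x => INR (y x) * h x).
Proof. induction l; simpl; auto. rewrite lsum_app, lsum_repeat, IHl; auto. Qed.

Lemma lsum_ind_nodup (l : list R) a h : NoDup l -> In a l ->
  lsum l (fun x => (if Req_dec_T a x then 1 else 0) * h x) = h a.
Proof.
  induction l as [|b l IH]; intros Hl Ha; [contradiction|]. inversion Hl; subst.
  simpl. destruct Ha as [->|Ha].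
  - destruct (Req_dec_T a a) as [_|n]; [|congruence].
    rewrite lsum_zero; [ring|]. intros x Hx. destruct (Req_dec_T a x); [subst; contradiction| ring].
  - destruct (Req_dec_T a b) as [->|_]; [contradiction|]. rewrite IH; auto. ring.
Qed.

Lemma lsum_count (xs l : list R) h : NoDup l -> incl xs l ->
  lsum l (fun x => INR (count_occ Req_dec_T xs x) * h x) = lsum xs h.
Proof.
  revert l. induction xs as [|a xs IH]; intros l Hl Hinc.
  - simpl. apply lsum_zero. intros; simpl; ring.
  - rewrite (lsum_ext l _ (fun x => (if Req_dec_T a x then 1 else 0) * h x +
        INR (count_occ Req_dec_T xs x) * h x)).
    + rewrite lsum_plus, lsum_ind_nodup, IH; auto.
      * intros r Hr; apply Hinc; simpl; auto.
      * apply Hinc; simpl; auto.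
    + intros x. simpl. destruct (Req_dec_T a x); [rewrite S_INR|]; ring.
Qed.

Definition valid_list (b : R) (p : R -> R) :=
  forall xs : list R, (exists k, lsum xs (fun x => x) - b = IZR k) -> lsum xs p >= 1.

Lemma valid_to_list b p : valid b p -> valid_list b p.
Proof.
  intros [Hnn Hv] xs [k Hk].
  set (y := count_occ Req_dec_T xs). set (l := nodup Req_dec_T xs).
  assert (Hl : NoDup l) by apply NoDup_nodup.
  assert (Hinc : incl xs l) by (intros r Hr; apply nodup_In; auto).
  assert (Hs : support_in y l).
  { split; auto. intros x Hx. apply nodup_In. destruct (In_dec Req_dec_T x xs); auto.
    exfalso; apply Hx. apply count_occ_not_In; auto. }
  specialize (Hv y l Hs).
  assert (E1 : lsum l (fun x => INR (y x) * x) = lsum xs (fun x => x)) by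
    (apply (lsum_count xs l (fun x => x)); auto).
  assert (E2 : lsum l (fun x => p x * INR (y x)) = lsum xs p).
  { rewrite <- (lsum_count xs l p); auto. apply lsum_ext; intros; unfold y; ring. }
  rewrite <- E2. apply Hv. exists k. rewrite E1; auto.
Qed.

Lemma list_to_valid b p : (forall x, 0 <= p x) -> valid_list b p -> valid b p.
Proof.
  intros Hnn Hv. split; auto. intros y l Hs [k Hk].
  set (xs := flat_map (fun x => repeat x (y x)) l).
  assert (E1 : lsum xs (fun x => x) = lsum l (fun x => INR (y x) * x)) by apply lsum_flat.
  assert (E2 : lsum xs p = lsum l (fun x => p x * INR (y x))).
  { unfold xs; rewrite lsum_flat. apply lsum_ext; intros; ring. }
  rewrite <- E2. apply Hv. exists k. rewrite E1; auto.
Qed.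

Definition lam (B : R -> Prop) (x : R) : R := Q2R (hamel_coef B (/2) x).

Lemma Q2R0 : Q2R 0 = 0. Proof. unfold Q2R; simpl. field. Qed.
Lemma Q2R1 : Q2R 1 = 1. Proof. unfold Q2R; simpl. field. Qed.

Lemma Q2R_zero q : (q == 0)%Q -> Q2R q = 0.
Proof. intros H; rewrite (Qeq_eqR _ _ H); apply Q2R0. Qed.

Lemma rep_unique B (HB : is_Hamel_basis B) c c' x :
  represents B c x -> represents B c' x -> forall r, Q2R (c r) = Q2R (c' r).
Proof.
  intros [l [Hl [HlB [Hlz Hx]]]] [l' [Hl' [HlB' [Hlz' Hx']]]] r.
  set (L := nodup Req_dec_T (l ++ l')).
  assert (HL : NoDup L) by apply NoDup_nodup.
  assert (HinL : forall r, In r L <-> In r l \/ In r l').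
  { intros r0; unfold L; rewrite nodup_In; split; [apply in_app_or| apply in_or_app]. }
  assert (E1 : lsum L (fun r => Q2R (c r) * r) = x).
  { rewrite Hx. apply lsum_extend; auto.
    - intros r0 h; apply HinL; auto.
    - intros r0 _ Hn; rewrite Q2R_zero by auto; ring. }
  assert (E2 : lsum L (fun r => Q2R (c' r) * r) = x).
  { rewrite Hx'. apply lsum_extend; auto.
    - intros r0 h; apply HinL; auto.
    - intros r0 _ Hn; rewrite Q2R_zero by auto; ring. }
  set (d := fun r => (c r - c' r)%Q).
  assert (Hd : represents B d 0).
  { exists L. split; [auto|split; [|split]].
    - intros r0 h; apply HinL in h; destruct h; auto.
    - intros r0 h. apply eqR_Qeq. unfold d. rewrite Q2R_minus, Q2R0.
      rewrite !Q2R_zero; [ring| |]; apply Hlz' + apply Hlz; intro; apply h, HinL; auto.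
    - rewrite (lsum_ext L _ (fun r => Q2R (c r) * r - Q2R (c' r) * r)).
      + rewrite lsum_minus, E1, E2; ring.
      + intros; unfold d; rewrite Q2R_minus; ring. }
  pose proof (Q2R_zero (d r) (proj2 HB d Hd r)) as H0. unfold d in H0.
  rewrite Q2R_minus in H0. lra.
Qed.

Lemma hamel_spec B (HB : is_Hamel_basis B) x :
  represents B (epsilon (inhabits (fun _ : R => 0%Q)) (fun c => represents B c x)) x.
Proof. apply epsilon_spec. apply (proj1 HB). Qed.

Lemma lam_rep B (HB : is_Hamel_basis B) c x : represents B c x -> lam B x = Q2R (c (/2)).
Proof. intros H. unfold lam, hamel_coef. apply (rep_unique B HB _ _ x); auto. apply hamel_spec; auto. Qed.

Lemma lam_add B (HB : is_Hamel_basis B) x y : lam B (x + y) = lam B x + lam B y.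
Proof.
  destruct (proj1 HB x) as [c Hc]. destruct (proj1 HB y) as [c' Hc'].
  rewrite (lam_rep B HB c x Hc), (lam_rep B HB c' y Hc').
  rewrite <- Q2R_plus. apply (lam_rep B HB (fun r => c r + c' r)%Q).
  destruct Hc as [l [Hl [HlB [Hlz Hx]]]]. destruct Hc' as [l' [Hl' [HlB' [Hlz' Hx']]]].
  set (L := nodup Req_dec_T (l ++ l')).
  assert (HL : NoDup L) by apply NoDup_nodup.
  assert (HinL : forall r, In r L <-> In r l \/ In r l').
  { intros r0; unfold L; rewrite nodup_In; split; [apply in_app_or| apply in_or_app]. }
  exists L. split; [auto|split; [|split]].
  - intros r0 h; apply HinL in h; destruct h; auto.
  - intros r0 h. apply eqR_Qeq. rewrite Q2R_plus, Q2R0.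
    rewrite !Q2R_zero; [ring| |]; apply Hlz' + apply Hlz; intro; apply h, HinL; auto.
  - rewrite (lsum_ext L _ (fun r => Q2R (c r) * r + Q2R (c' r) * r)).
    + rewrite lsum_plus. rewrite Hx, Hx'. f_equal; symmetry; apply lsum_extend; auto;
      try (intros r0 h; apply HinL; auto);
      intros r0 _ Hn; rewrite Q2R_zero by auto; ring.
    + intros; rewrite Q2R_plus; ring.
Qed.

Lemma lam_half B (HB : is_Hamel_basis B) (Hb : B (/2)) q : lam B (Q2R q * /2) = Q2R q.
Proof.
  set (c := fun r => if Req_dec_T r (/2) then q else 0%Q).
  rewrite (lam_rep B HB c).
  - unfold c. destruct (Req_dec_T (/2) (/2)); [auto| congruence].
  - exists (/2 :: nil). split; [constructor; [simpl; auto| constructor]|split; [|split]].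
    + intros r [<-|[]]; auto.
    + intros r h. unfold c. destruct (Req_dec_T r (/2)); [subst; exfalso; apply h; simpl; auto| reflexivity].
    + simpl. unfold c. destruct (Req_dec_T (/2) (/2)); [ring| congruence].
Qed.

Lemma lam_zero B (HB : is_Hamel_basis B) : lam B 0 = 0.
Proof. pose proof (lam_add B HB 0 0). rewrite Rplus_0_l in H. lra. Qed.

Lemma lam_sub B (HB : is_Hamel_basis B) x y : lam B (x - y) = lam B x - lam B y.
Proof. pose proof (lam_add B HB (x - y) y). replace (x - y + y) with x in H by ring. lra. Qed.

Lemma lam_lsum B (HB : is_Hamel_basis B) xs : lam B (lsum xs (fun x => x)) = lsum xs (lam B).
Proof. induction xs; simpl. apply lam_zero; auto. rewrite lam_add, IHxs; auto. Qed.

Lemma lam_halfpt B (HB : is_Hamel_basis B) (Hb : B (/2)) : lam B (/2) = 1.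
Proof. pose proof (lam_half B HB Hb 1) as H. rewrite Q2R1 in H. replace (1 * /2) with (/2) in H by ring. auto. Qed.

Lemma lam_rat B (HB : is_Hamel_basis B) x : exists q, lam B x = Q2R q.
Proof. exists (hamel_coef B (/2) x); reflexivity. Qed.

Lemma Q2R_IZR z : Q2R (inject_Z z) = IZR z.
Proof. unfold Q2R, inject_Z; simpl. field. Qed.

Lemma pi_odd B x k : lam B x = IZR (2 * k + 1) -> pi_half B x = 1.
Proof.
  intros H. unfold pi_half. destruct (excluded_middle_informative _) as [_|n]; auto.
  exfalso; apply n. exists k. apply eqR_Qeq. rewrite Q2R_IZR. exact H.
Qed.

Lemma pi_frac_gen B x m r : lam B x = IZR m + r -> 0 <= r < 1 ->
  ~ (exists k, lam B x = IZR (2 * k + 1)) -> pi_half B x = r.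
Proof.
  intros H Hr Hno. unfold pi_half. destruct (excluded_middle_informative _) as [o|_].
  - exfalso; apply Hno. destruct o as [k Hk]. exists k. unfold lam.
    rewrite (Qeq_eqR _ _ Hk), Q2R_IZR; auto.
  - set (q := hamel_coef B (/2) x) in *.
    assert (Hl : Q2R q = IZR m + r) by exact H.
    pose proof (Qle_Rle _ _ (Qfloor_le q)) as H1. pose proof (Qlt_Rlt _ _ (Qlt_floor q)) as H2.
    rewrite Q2R_IZR in H1, H2. rewrite plus_IZR in H2.
    assert (HF : Qfloor q = m).
    { assert (IZR (Qfloor q) < IZR (m + 1)) by (rewrite plus_IZR; lra).
      assert (IZR m < IZR (Qfloor q + 1)) by (rewrite plus_IZR; lra).
      apply lt_IZR in H0. apply lt_IZR in H3. lia. }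
    rewrite Q2R_minus, Q2R_IZR, HF. lra.
Qed.

Lemma pi_even B x k : lam B x = IZR (2 * k) -> pi_half B x = 0.
Proof.
  intros H. apply (pi_frac_gen B x (2 * k)); [lra|lra|].
  intros [k' Hk']. rewrite H in Hk'. apply eq_IZR in Hk'. lia.
Qed.

Lemma pi_frac B x m r : lam B x = IZR m + r -> 0 < r < 1 -> pi_half B x = r.
Proof.
  intros H Hr. apply (pi_frac_gen B x m); [auto|lra|].
  intros [k Hk]. rewrite H in Hk.
  assert (IZR 0 < IZR (2 * k + 1 - m)) by (rewrite minus_IZR; lra).
  assert (IZR (2 * k + 1 - m) < IZR 1) by (rewrite minus_IZR; lra).
  apply lt_IZR in H0. apply lt_IZR in H1. lia.
Qed.

Lemma lam_decomp B x : exists m a (s : positive),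
  lam B x = IZR m + IZR a / IZR (Zpos s) /\ (0 <= a < Zpos s)%Z.
Proof.
  set (q := hamel_coef B (/2) x). destruct q as [n s] eqn:Eq.
  exists (n / Zpos s)%Z, (n mod Zpos s)%Z, s. split.
  - unfold lam. fold q. rewrite Eq. unfold Q2R; simpl.
    rewrite (Z.div_mod n (Zpos s)) at 1 by lia.
    rewrite plus_IZR, mult_IZR. field. apply not_0_IZR; lia.
  - apply Z.mod_pos_bound; lia.
Qed.

Lemma frac_bounds (a s : Z) : (0 < a < s)%Z -> 0 < IZR a / IZR s < 1.
Proof.
  intros H. assert (0 < IZR a) by (apply IZR_lt; lia).
  assert (IZR a < IZR s) by (apply IZR_lt; lia).
  split. apply Rdiv_lt_0_compat; lra.
  apply (Rmult_lt_reg_r (IZR s)); [lra|]. unfold Rdiv. rewrite Rmult_assoc, Rinv_l; lra.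
Qed.

Lemma pi_cases B x :
  (exists k, lam B x = IZR (2 * k + 1) /\ pi_half B x = 1) \/
  (exists n, pi_half B x = lam B x - IZR n /\ 0 <= pi_half B x /\
     (pi_half B x = 0 -> exists k, lam B x = IZR (2 * k))).
Proof.
  destruct (lam_decomp B x) as [m [a [s [H Ha]]]].
  destruct (Z.eq_dec a 0) as [->|Hna].
  - replace (IZR 0 / IZR (Z.pos s)) with 0 in H by (unfold Rdiv; ring). rewrite Rplus_0_r in H.
    destruct (Z.Even_or_Odd m) as [[k ->]|[k ->]].
    + right. exists (2 * k)%Z. rewrite (pi_even B x k H). split; [lra| split; [lra|]].
      intros _; exists k; auto.
    + left. exists k. split; auto. apply (pi_odd B x k H).
  - right. pose proof (frac_bounds a (Zpos s) ltac:(lia)).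
    rewrite (pi_frac B x m _ H H0). exists m. split; [lra| split; [lra|]]. intros; lra.
Qed.

Lemma pi_nonneg B x : 0 <= pi_half B x.
Proof. destruct (pi_cases B x) as [[k [_ ->]]|[n [_ [H _]]]]; lra. Qed.

Lemma lam_IZR B (HB : is_Hamel_basis B) (Hb : B (/2)) k : lam B (IZR k) = IZR (2 * k).
Proof.
  replace (IZR k) with (Q2R (inject_Z (2 * k)) * /2) by (rewrite Q2R_IZR, mult_IZR; simpl; field).
  rewrite lam_half, Q2R_IZR; auto.
Qed.

Lemma sum_aux B xs : (forall x, In x xs -> ~ exists k, lam B x = IZR (2 * k + 1)) ->
  exists N, lsum xs (pi_half B) = lsum xs (lam B) - IZR N /\
    (lsum xs (pi_half B) = 0 -> exists k, lsum xs (lam B) = IZR (2 * k)).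
Proof.
  induction xs as [|x xs IH]; intros Hno.
  - exists 0%Z. simpl. split; [lra|]. intros _; exists 0%Z; simpl; lra.
  - destruct IH as [N [HN HZ]]. { intros y hy; apply Hno; simpl; auto. }
    destruct (pi_cases B x) as [[k [Hk _]]|[n [Hn [Hp Hz]]]].
    + exfalso. apply (Hno x); simpl; auto. exists k; auto.
    + exists (n + N)%Z. rewrite !lsum_cons. split. rewrite plus_IZR; lra.
      intros H0. pose proof (lsum_nonneg xs (pi_half B) (fun y _ => pi_nonneg B y)).
      destruct (Hz ltac:(lra)) as [k1 Hk1]. destruct (HZ ltac:(lra)) as [k2 Hk2].
      exists (k1 + k2)%Z. rewrite Hk1, Hk2, <- plus_IZR. f_equal. lia.
Qed.

Lemma pi_valid B (HB : is_Hamel_basis B) (Hb : B (/2)) : valid (/2) (pi_half B).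
Proof.
  apply list_to_valid; [apply pi_nonneg|]. intros xs [k Hk].
  assert (Hs : lsum xs (lam B) = IZR (2 * k + 1)).
  { rewrite <- lam_lsum by auto. replace (lsum xs (fun x => x)) with (/2 + IZR k) by lra.
    rewrite lam_add, lam_halfpt, lam_IZR by auto. rewrite plus_IZR; simpl; lra. }
  destruct (classic (exists x, In x xs /\ exists k, lam B x = IZR (2 * k + 1))) as [[x [Hx [k' Hk']]]|Hno].
  - pose proof (lsum_ge_in xs (pi_half B) x (fun y _ => pi_nonneg B y) Hx).
    rewrite (pi_odd B x k' Hk') in H. lra.
  - destruct (sum_aux B xs) as [N [HN HZ]].
    { intros x Hx Hk'. apply Hno. exists x; auto. }
    pose proof (lsum_nonneg xs (pi_half B) (fun y _ => pi_nonneg B y)).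
    rewrite Hs, <- minus_IZR in HN.
    destruct (Z.eq_dec (2 * k + 1 - N) 0) as [E|E].
    + exfalso. rewrite E in HN. destruct (HZ HN) as [k2 Hk2]. rewrite Hs in Hk2.
      apply eq_IZR in Hk2. lia.
    + rewrite HN in *. assert (0 <= 2 * k + 1 - N)%Z by (apply le_IZR; lra).
      assert (1 <= 2 * k + 1 - N)%Z by lia. apply IZR_le in H1. lra.
Qed.

Lemma solve_lin s p c : s <> 0 -> s * p = c -> p = c / s.
Proof. intros H E; subst; field; auto. Qed.

Lemma INR_Z2N z : (0 <= z)%Z -> INR (Z.to_nat z) = IZR z.
Proof. intros H. rewrite INR_IZR_INZ, Z2Nat.id; auto. Qed.

Definition upt (s : positive) : R := Q2R (1 # s) * /2.

Lemma TL B (HB : is_Hamel_basis B) (Hb : B (/2)) p1 p2 (V1 : valid (/2) p1) (V2 : valid (/2) p2)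
  (Hm : forall x, pi_half B x = /2 * p1 x + /2 * p2 x) xs :
  (exists k, lsum xs (lam B) = IZR (2 * k + 1)) -> lsum xs (pi_half B) = 1 -> lsum xs p1 = 1.
Proof.
  intros [k Hk] Hp.
  set (e := /2 - lsum xs (fun x => x)).
  assert (He : lam B e = IZR (2 * (- k))).
  { unfold e. rewrite lam_sub, lam_halfpt, lam_lsum, Hk by auto.
    rewrite plus_IZR, !mult_IZR, opp_IZR. simpl. ring. }
  pose proof (pi_even B e _ He) as Hpe. rewrite Hm in Hpe.
  pose proof (proj1 V1 e). pose proof (proj1 V2 e).
  assert (Hs : exists k0, lsum (xs ++ e :: nil) (fun x => x) - /2 = IZR k0).
  { exists 0%Z. rewrite lsum_app. simpl. unfold e. ring. }
  pose proof (valid_to_list _ _ V1 _ Hs) as H1. pose proof (valid_to_list _ _ V2 _ Hs) as H2.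
  rewrite lsum_app in H1, H2. simpl in H1, H2.
  rewrite (lsum_ext xs _ (fun x => /2 * p1 x + /2 * p2 x)), lsum_plus, !lsum_scal in Hp by auto.
  lra.
Qed.


Lemma lam_upt B (HB : is_Hamel_basis B) (Hb : B (/2)) s : lam B (upt s) = IZR 0 + IZR 1 / IZR (Zpos s).
Proof. unfold upt. rewrite lam_half by auto. unfold Q2R; simpl. field. apply not_0_IZR; lia. Qed.

Lemma G_upt B (HB : is_Hamel_basis B) (Hb : B (/2)) p1 p2 (V1 : valid (/2) p1) (V2 : valid (/2) p2)
  (Hm : forall x, pi_half B x = /2 * p1 x + /2 * p2 x) s :
  (1 < Zpos s)%Z -> p1 (upt s) = IZR 1 / IZR (Zpos s).
Proof.
  intros Hs. pose proof (lam_upt B HB Hb s) as Hl.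
  assert (HS : IZR (Zpos s) <> 0) by (apply not_0_IZR; lia).
  pose proof (pi_frac B _ _ _ Hl (frac_bounds 1 (Zpos s) ltac:(lia))) as Hp.
  assert (HN : INR (Pos.to_nat s) = IZR (Zpos s)) by (rewrite INR_IZR_INZ, positive_nat_Z; auto).
  pose proof (TL B HB Hb p1 p2 V1 V2 Hm (repeat (upt s) (Pos.to_nat s))) as T.
  rewrite !lsum_repeat, HN, Hl, Hp in T.
  apply (solve_lin (IZR (Zpos s))); auto. apply T.
  - exists 0%Z. simpl. field; auto.
  - field; auto.
Qed.

Lemma case_even B (HB : is_Hamel_basis B) (Hb : B (/2)) p1 p2 (V1 : valid (/2) p1) (V2 : valid (/2) p2)
  (Hm : forall x, pi_half B x = /2 * p1 x + /2 * p2 x) x k a (s : positive) :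
  lam B x = IZR (2 * k) + IZR a / IZR (Zpos s) -> (0 < a < Zpos s)%Z ->
  p1 x = IZR a / IZR (Zpos s).
Proof.
  intros Hl Ha.
  assert (HS : IZR (Zpos s) <> 0) by (apply not_0_IZR; lia).
  pose proof (G_upt B HB Hb p1 p2 V1 V2 Hm s ltac:(lia)) as Gu.
  pose proof (pi_frac B _ _ _ Hl (frac_bounds a (Zpos s) Ha)) as Hp.
  pose proof (pi_frac B _ _ _ (lam_upt B HB Hb s) (frac_bounds 1 (Zpos s) ltac:(lia))) as Hpu.
  pose proof (TL B HB Hb p1 p2 V1 V2 Hm (x :: repeat (upt s) (Z.to_nat (Zpos s - a)))) as T.
  rewrite !lsum_cons, !lsum_repeat, INR_Z2N, Gu, Hp, Hpu, Hl, lam_upt, minus_IZR in T by (auto; lia).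
  enough (p1 x + (IZR (Z.pos s) - IZR a) * (IZR 1 / IZR (Z.pos s)) = 1) by (replace (p1 x) with (1 - (IZR (Z.pos s) - IZR a) * (IZR 1 / IZR (Z.pos s))) by lra; field; auto).
  apply T.
  - exists k. rewrite plus_IZR, mult_IZR. simpl. field; auto.
  - field; auto.
Qed.

Lemma case_odd_small B (HB : is_Hamel_basis B) (Hb : B (/2)) p1 p2 (V1 : valid (/2) p1) (V2 : valid (/2) p2)
  (Hm : forall x, pi_half B x = /2 * p1 x + /2 * p2 x) x k a (s : positive) :
  lam B x = IZR (2 * k + 1) + IZR a / IZR (Zpos s) -> (0 < a /\ 2 * a <= Zpos s)%Z ->
  p1 x = IZR a / IZR (Zpos s).
Proof.
  intros Hl Ha.
  assert (HS : IZR (Zpos s) <> 0) by (apply not_0_IZR; lia).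
  pose proof (G_upt B HB Hb p1 p2 V1 V2 Hm s ltac:(lia)) as Gu.
  pose proof (pi_frac B _ _ _ Hl (frac_bounds a (Zpos s) ltac:(lia))) as Hp.
  pose proof (pi_frac B _ _ _ (lam_upt B HB Hb s) (frac_bounds 1 (Zpos s) ltac:(lia))) as Hpu.
  pose proof (TL B HB Hb p1 p2 V1 V2 Hm (x :: x :: repeat (upt s) (Z.to_nat (Zpos s - 2 * a)))) as T.
  rewrite !lsum_cons, !lsum_repeat, INR_Z2N, Gu, Hp, Hpu, Hl, lam_upt, minus_IZR, mult_IZR in T by (auto; lia).
  enough (2 * p1 x + (IZR (Z.pos s) - 2 * IZR a) * (IZR 1 / IZR (Z.pos s)) = 1) by
    (replace (p1 x) with ((1 - (IZR (Z.pos s) - 2 * IZR a) * (IZR 1 / IZR (Z.pos s))) / 2) by lra; field; auto).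
  replace (2 * p1 x) with (p1 x + (p1 x + 0)) by ring. rewrite <- Rplus_assoc, Rplus_0_r.
  rewrite Rplus_assoc. apply T.
  - exists (2 * k + 1)%Z. repeat rewrite ?plus_IZR, ?mult_IZR. field; auto.
  - simpl. field; auto.
Qed.

Lemma case_odd_big B (HB : is_Hamel_basis B) (Hb : B (/2)) p1 p2 (V1 : valid (/2) p1) (V2 : valid (/2) p2)
  (Hm : forall x, pi_half B x = /2 * p1 x + /2 * p2 x) x k a (s : positive) :
  lam B x = IZR (2 * k + 1) + IZR a / IZR (Zpos s) -> (a < Zpos s < 2 * a)%Z ->
  p1 x = IZR a / IZR (Zpos s).
Proof.
  intros Hl Ha.
  assert (HS : IZR (Zpos s) <> 0) by (apply not_0_IZR; lia).
  set (w := Q2R (1 - hamel_coef B (/2) x) * /2).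
  assert (Hw : lam B w = IZR (2 * (- k - 1) + 1) + IZR (Zpos s - a) / IZR (Zpos s)).
  { unfold w. rewrite lam_half, Q2R_minus, Q2R1 by auto. fold (lam B x). rewrite Hl.
    rewrite !plus_IZR, !mult_IZR, !minus_IZR, opp_IZR. simpl. field; auto. }
  pose proof (case_odd_small B HB Hb p1 p2 V1 V2 Hm w _ _ s Hw ltac:(lia)) as Pw.
  pose proof (pi_frac B _ _ _ Hl (frac_bounds a (Zpos s) ltac:(lia))) as Hp.
  pose proof (pi_frac B _ _ _ Hw (frac_bounds (Zpos s - a) (Zpos s) ltac:(lia))) as Hpw.
  pose proof (TL B HB Hb p1 p2 V1 V2 Hm (x :: w :: nil)) as T.
  simpl in T. rewrite Pw, Hp, Hpw, Hl, Hw in T.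
  enough (p1 x + (IZR (Z.pos s - a) / IZR (Z.pos s) + 0) = 1) by
    (rewrite minus_IZR in H; replace (p1 x) with (1 - (IZR (Z.pos s) - IZR a) / IZR (Z.pos s)) by lra; field; auto).
  apply T.
  - exists 0%Z. rewrite !plus_IZR, !mult_IZR, !minus_IZR, opp_IZR. simpl. field; auto.
  - rewrite minus_IZR. field; auto.
Qed.

Lemma point B (HB : is_Hamel_basis B) (Hb : B (/2)) p1 p2 (V1 : valid (/2) p1) (V2 : valid (/2) p2)
  (Hm : forall x, pi_half B x = /2 * p1 x + /2 * p2 x) x : p1 x = pi_half B x.
Proof.
  destruct (lam_decomp B x) as [m [a [s [H Ha]]]].
  destruct (Z.eq_dec a 0) as [->|Hna].
  - replace (IZR 0 / IZR (Z.pos s)) with 0 in H by (unfold Rdiv; ring). rewrite Rplus_0_r in H.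
    destruct (Z.Even_or_Odd m) as [[k ->]|[k ->]].
    + pose proof (pi_even B x k H) as Hp. pose proof (Hm x) as Hx.
      pose proof (proj1 V1 x). pose proof (proj1 V2 x). lra.
    + rewrite (pi_odd B x k H).
      pose proof (TL B HB Hb p1 p2 V1 V2 Hm (x :: nil)) as T. rewrite !lsum_cons, !lsum_nil in T.
      rewrite (pi_odd B x k H), !Rplus_0_r in T. apply T; [exists k; lra| ring].
  - pose proof (frac_bounds a (Zpos s) ltac:(lia)) as Fb.
    rewrite (pi_frac B x m _ H Fb).
    destruct (Z.Even_or_Odd m) as [[k ->]|[k ->]].
    + apply (case_even B HB Hb p1 p2 V1 V2 Hm x k); auto; lia.
    + destruct (Z_le_gt_dec (2 * a) (Zpos s)).
      * apply (case_odd_small B HB Hb p1 p2 V1 V2 Hm x k); auto; lia.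
      * apply (case_odd_big B HB Hb p1 p2 V1 V2 Hm x k); auto; lia.
Qed.

Theorem mainTheorem3 (B : R -> Prop) (HB : is_Hamel_basis B) (Hb : B (/2)) :
  extreme (/2) (pi_half B).
Proof.
  split; [apply pi_valid; auto|]. intros p1 p2 V1 V2 Hm. split; intro x.
  - apply (point B HB Hb p1 p2); auto.
  - apply (point B HB Hb p2 p1); auto. intros; rewrite Hm; ring.
Qed.
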